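(* Let $\mathbb{P}: M_2 \to M_2$ be the linear map $$\mathbb{P}\begin{pmatrix} x_{11} & x_{12} \\ x_{21} & x_{22}\end{pmatrix} = \begin{pmatrix} \frac{x_{11}+x_{22}}{2} & x_{12} \\ x_{21} & \frac{x_{11}+x_{22}}{2}\end{pmatrix},$$ and let $\mathbb{I}$ denote the identity map on $M_2$. Then the minimum eigenvalue of $(\mathbb{I}_A\otimes\mathbb{P}_B)(\sigma_{AB})$, minimized over all two-qubit density matrices $\sigma_{AB}$ on $\mathbb{C}^2\otimes\mathbb{C}^2$, equals $-\frac14$, and this minimum is attained for a maximally entangled state, e.g. $\frac{1}{\sqrt2}(|00\rangle+|11\rangle)$.
   Context: $M_2$ denotes the space of complex $2\times 2$ matrices; $\mathbb{I}_A\otimes\mathbb{P}_B$ denotes the map acting as the identity on the first qubit and as $\mathbb{P}$ on the second qubit. A two-qubit density matrix is a positive semidefinite trace-one operator on $\mathbb{C}^2\otimes\mathbb{C}^2$. *)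

(* Defs.v *)
From HB Require Import structures.
From mathcomp Require Import all_boot all_order all_algebra all_field.
Set Implicit Arguments. Unset Strict Implicit. Unset Printing Implicit Defensive.
Import Order.TTheory GRing.Theory Num.Theory Num.Def.
Local Open Scope ring_scope.

(* Two-qubit operators are 4x4 matrices indexed by
   'I_4, with the standard Kronecker convention |a b> = e_(2a+b),
   i.e. the first qubit (A) is the most significant index. *)

Definition adj (m n : nat) (M : 'M[algC]_(m, n)) : 'M[algC]_(n, m) :=
  map_mx conjC M^T.

Definition Pmap (X : 'M[algC]_2) : 'M[algC]_2 :=
  \matrix_(i < 2, j < 2)
    (if i == j then (X 0 0 + X 1 1) / 2%:R else X i j).

Definition tidx (a b : 'I_2) : 'I_4 := inord (2 * a + b).
Definition hiA (i : 'I_4) : 'I_2 := inord (i %/ 2).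
Definition loB (i : 'I_4) : 'I_2 := inord (i %% 2).

Definition blockB (S : 'M[algC]_4) (a a' : 'I_2) : 'M[algC]_2 :=
  \matrix_(b < 2, b' < 2) S (tidx a b) (tidx a' b').

(* (I_A ⊗ P_B)(S) : apply P to each block *)
Definition IP (S : 'M[algC]_4) : 'M[algC]_4 :=
  \matrix_(i < 4, j < 4) Pmap (blockB S (hiA i) (hiA j)) (loB i) (loB j).

Definition density_matrix (S : 'M[algC]_4) : Prop :=
  [/\ adj S = S,
      (forall v : 'cV[algC]_4, 0 <= (adj v *m S *m v) 0 0)
    & \tr S = 1].

Definition phi_plus : 'cV[algC]_4 :=
  \col_i (if (i == tidx 0 0) || (i == tidx 1 1) then (sqrtC 2%:R)^-1 else 0).
Definition rho_plus : 'M[algC]_4 := phi_plus *m adj phi_plus.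

(* Main.v *)
Require Import Defs.
From HB Require Import structures.
From mathcomp Require Import all_boot all_order all_algebra all_field.
From mathcomp Require Import ring.
Import Order.TTheory GRing.Theory Num.Theory.
Local Open Scope ring_scope.

Lemma core_real (R : numDomainType) (a d N0 N1 M0 M1 e : R) :
  0 <= a -> 0 <= d -> 0 <= N0 -> 0 <= N1 -> 0 <= M0 -> 0 <= M1 ->
  a ^+ 2 <= N0 * M0 -> d ^+ 2 <= N1 * M1 -> (a - d) ^+ 2 <= e ->
  0 <= 4%:R * e - 2%:R * (a ^+ 2 + d ^+ 2) + (N0 + N1) * (M0 + M1).
Proof.
move=> a0 d0 N00 N10 M00 M10 ha hd he.
set u := N0 * M1; set v := N1 * M0.
have u0 : 0 <= u by rewrite mulr_ge0.
have v0 : 0 <= v by rewrite mulr_ge0.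
have h1 : 2%:R * a * d <= u + v.
  rewrite -(ler_sqr (R:=R)); last 2 first.
  - by rewrite qualifE /= !mulr_ge0 // ler0n.
  - by rewrite qualifE /= addr_ge0.
  have -> : (u + v) ^+ 2 = 4%:R * (u * v) + (u - v) ^+ 2 by rewrite /u /v; ring.
  have -> : (2%:R * a * d) ^+ 2 = 4%:R * (a ^+ 2 * d ^+ 2) by ring.
  have hsq : 0 <= (u - v) ^+ 2.
    by apply: real_exprn_even_ge0; rewrite // rpredB // ger0_real.
  apply: (ler_wpDr hsq).
  rewrite ler_pM2l ?ltr0n //.
  have -> : u * v = (N0 * M0) * (N1 * M1) by rewrite /u /v; ring.
  by apply: ler_pM; rewrite ?exprn_ge0.
have h2 : (a + d) ^+ 2 <= (N0 + N1) * (M0 + M1).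
  have -> : (a + d) ^+ 2 = a ^+ 2 + d ^+ 2 + 2%:R * a * d by ring.
  have -> : (N0 + N1) * (M0 + M1) = N0 * M0 + N1 * M1 + (u + v) by rewrite /u /v; ring.
  by rewrite !lerD.
have -> : 4%:R * e - 2%:R * (a ^+ 2 + d ^+ 2) + (N0 + N1) * (M0 + M1)
   = 4%:R * (e - (a - d) ^+ 2) + ((N0 + N1) * (M0 + M1) - (a + d) ^+ 2)
     + 3%:R * (a - d) ^+ 2 by ring.
have hsq : 0 <= (a - d) ^+ 2.
  by apply: real_exprn_even_ge0; rewrite // rpredB // ger0_real.
apply: addr_ge0; last by rewrite mulr_ge0 ?ler0n.
apply: addr_ge0; last by rewrite subr_ge0.
by rewrite mulr_ge0 ?ler0n // subr_ge0.
Qed.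

Lemma cs2 (u0 u2 c0 c2 : algC) :
  (u0 * c0 + u2 * c2) * (u0 * c0 + u2 * c2)^* <=
  (u0 * u0^* + u2 * u2^*) * (c0 * c0^* + c2 * c2^*).
Proof.
rewrite -subr_ge0.
have -> : (u0 * u0^* + u2 * u2^*) * (c0 * c0^* + c2 * c2^*) -
   (u0 * c0 + u2 * c2) * (u0 * c0 + u2 * c2)^* =
   (u0 * c2^* - u2 * c0^*) * (u0 * c2^* - u2 * c0^*)^*.
  rewrite !(rmorphB, rmorphD, rmorphM) /= !conjCK; ring.
exact: mul_conjC_ge0.
Qed.

Lemma rank1 (u0 u1 u2 u3 c0 c1 c2 c3 p q r s N M : algC) :
  p = u0 * c0 + u2 * c2 -> q = u1 * c1 + u3 * c3 ->
  N = u0 * u0^* + u1 * u1^* + u2 * u2^* + u3 * u3^* ->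
  M = c0 * c0^* + c1 * c1^* + c2 * c2^* + c3 * c3^* ->
  0 <= 2%:R * (p * p^* + q * q^* + r * r^* + s * s^*)
       + 4%:R * (p * q^* + q * p^*) + N * M.
Proof.
move=> Hp Hq HN HM.
have N00 : 0 <= u0 * u0^* + u2 * u2^* by rewrite addr_ge0 ?mul_conjC_ge0.
have N10 : 0 <= u1 * u1^* + u3 * u3^* by rewrite addr_ge0 ?mul_conjC_ge0.
have M00 : 0 <= c0 * c0^* + c2 * c2^* by rewrite addr_ge0 ?mul_conjC_ge0.
have M10 : 0 <= c1 * c1^* + c3 * c3^* by rewrite addr_ge0 ?mul_conjC_ge0.
have ha : `|p| ^+ 2 <= (u0 * u0^* + u2 * u2^*) * (c0 * c0^* + c2 * c2^*).
  by rewrite normCK Hp; apply: cs2.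
have hd : `|q| ^+ 2 <= (u1 * u1^* + u3 * u3^*) * (c1 * c1^* + c3 * c3^*).
  by rewrite normCK Hq; apply: cs2.
have he : (`|p| - `|q|) ^+ 2 <= `|p + q| ^+ 2.
  rewrite -real_normK ?rpredB ?normr_real //.
  by apply: lerXn2r; rewrite ?qualifE /= ?normr_ge0 // ler_dist_normD.
have := @core_real _ _ _ _ _ _ _ _ (normr_ge0 p) (normr_ge0 q) N00 N10 M00 M10 ha hd he.
move=> H.
have -> : 2%:R * (p * p^* + q * q^* + r * r^* + s * s^*)
       + 4%:R * (p * q^* + q * p^*) + N * M =
   (4%:R * `|p + q| ^+ 2 - 2%:R * (`|p| ^+ 2 + `|q| ^+ 2) +
      (u0 * u0^* + u2 * u2^* + (u1 * u1^* + u3 * u3^*)) *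
      (c0 * c0^* + c2 * c2^* + (c1 * c1^* + c3 * c3^*)))
   + 2%:R * (r * r^* + s * s^*).
  rewrite !normCK rmorphD HN HM; ring.
by rewrite addr_ge0 // mulr_ge0 ?ler0n // addr_ge0 ?mul_conjC_ge0.
Qed.
Definition i0 : 'I_4 := @Ordinal 4 0 isT.
Definition i1 : 'I_4 := @Ordinal 4 1 isT.
Definition i2 : 'I_4 := @Ordinal 4 2 isT.
Definition i3 : 'I_4 := @Ordinal 4 3 isT.
Lemma t00 : tidx 0 0 = i0. Proof. by apply/val_inj; rewrite /= inordK. Qed.
Lemma t01 : tidx 0 1 = i1. Proof. by apply/val_inj; rewrite /= inordK. Qed.
Lemma t10 : tidx 1 0 = i2. Proof. by apply/val_inj; rewrite /= inordK. Qed.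
Lemma t11 : tidx 1 1 = i3. Proof. by apply/val_inj; rewrite /= inordK. Qed.
Lemma h0 : hiA i0 = 0. Proof. by apply/val_inj; rewrite /= inordK. Qed.
Lemma h1 : hiA i1 = 0. Proof. by apply/val_inj; rewrite /= inordK. Qed.
Lemma h2 : hiA i2 = 1. Proof. by apply/val_inj; rewrite /= inordK. Qed.
Lemma h3 : hiA i3 = 1. Proof. by apply/val_inj; rewrite /= inordK. Qed.
Lemma l0 : loB i0 = 0. Proof. by apply/val_inj; rewrite /= inordK. Qed.
Lemma l1 : loB i1 = 1. Proof. by apply/val_inj; rewrite /= inordK. Qed.
Lemma l2 : loB i2 = 0. Proof. by apply/val_inj; rewrite /= inordK. Qed.
Lemma l3 : loB i3 = 1. Proof. by apply/val_inj; rewrite /= inordK. Qed.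
Lemma sum4 (F : 'I_4 -> algC) : \sum_(i < 4) F i = F i0 + F i1 + F i2 + F i3.
Proof.
rewrite !big_ord_recl big_ord0 addr0 !addrA.
by congr (_ + _ + _ + _); congr F; apply/val_inj.
Qed.
Lemma e01 : ((0 : 'I_2) == 1) = false. Proof. by []. Qed.
Lemma e10 : ((1 : 'I_2) == 0) = false. Proof. by []. Qed.
Lemma val_rank1 (u : 'rV[algC]_4) (c : 'cV[algC]_4) :
  0 <= 4%:R * (u *m IP (c *m adj c) *m adj u) 0 0 + (u *m adj u) 0 0 * \tr (c *m adj c).
Proof.
rewrite /mxtrace; do ! rewrite ?mxE ?sum4 ?big_ord1. rewrite !h0 !h1 !h2 !h3 !l0 !l1 !l2 !l3 ?e01 ?e10 ?eqxx !t00 !t01 !t10 !t11. 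
set u0 := u 0 i0; set u1 := u 0 i1; set u2 := u 0 i2; set u3 := u 0 i3.
set c0 := c i0 ord0; set c1 := c i1 ord0; set c2 := c i2 ord0; set c3 := c i3 ord0.
have H := @rank1 u0 u1 u2 u3 c0 c1 c2 c3 _ _ (u0 * c1 + u2 * c3) (u1 * c0 + u3 * c2) _ _
  (erefl (u0 * c0 + u2 * c2)) (erefl (u1 * c1 + u3 * c3))
  (erefl (u0 * u0^* + u1 * u1^* + u2 * u2^* + u3 * u3^*))
  (erefl (c0 * c0^* + c1 * c1^* + c2 * c2^* + c3 * c3^*)).
apply: (le_trans H); rewrite le_eqVlt; apply/orP; left; apply/eqP.
rewrite !(rmorphD, rmorphM) /=.
by field.
Qed.
Lemma adjK m n (X : 'M[algC]_(m, n)) : adj (adj X) = X.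
Proof. by apply/matrixP => i j; rewrite /adj !mxE conjCK. Qed.

Lemma adj_row k (U : 'M[algC]_4) : adj (row k U) = col k (adj U).
Proof. by apply/matrixP => i j; rewrite /adj !mxE. Qed.

Lemma decomp (S : 'M[algC]_4) : adj S = S ->
  (forall v : 'cV[algC]_4, 0 <= (adj v *m S *m v) 0 0) ->
  exists d : 'I_4 -> algC, exists c : 'I_4 -> 'cV[algC]_4,
    (forall k, 0 <= d k) /\ S = \sum_k d k *: (c k *m adj (c k)).
Proof.
move=> Sh Spsd.
have Sn : S \is normalmx.
  by apply/normalmxP; rewrite -[(S ^t*)%sesqui]/(adj S) Sh.
have hS := orthomx_spectralP Sn.
set U := spectralmx S in hS; set D := spectral_diag S in hS.
have Uu : U \is unitarymx by apply: spectral_unitarymx.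
rewrite (invmx_unitary Uu) -[(U ^t*)%sesqui]/(adj U) in hS.
have UU : U *m adj U = 1%:M by apply/unitarymxP.
exists (fun k => D 0 k), (fun k => adj (row k U)); split.
  move=> k; have := Spsd (adj (row k U)).
  rewrite adjK hS !mulmxA -row_mul UU -!mulmxA adj_row.
  have -> : U *m col k (adj U) = col k (U *m adj U).
    by apply/matrixP => i j; rewrite !mxE; apply: eq_bigr => l _; rewrite !mxE.
  rewrite UU.
  rewrite mul_diag_mx mxE (bigD1 k) //= big1 ?addr0.
    by rewrite !mxE eqxx !mulr1n mul1r mulr1.
  by move=> l /negbTE hl; rewrite !mxE eq_sym hl mulr0n mul0r.
rewrite {1}hS; apply/matrixP => i j; rewrite summxE !mxE.
apply: eq_bigr => l _; rewrite adjK !mxE big_ord1.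
rewrite (bigD1 l) //= big1 ?addr0; last first.
  by move=> m /negbTE hm; rewrite !mxE hm mulr0n mulr0.
rewrite /adj !mxE eqxx mulr1n; ring.
Qed.

Lemma IPE (S : 'M[algC]_4) i j : IP S i j =
  if loB i == loB j then (S (tidx (hiA i) 0) (tidx (hiA j) 0) + S (tidx (hiA i) 1) (tidx (hiA j) 1)) / 2%:R
  else S (tidx (hiA i) (loB i)) (tidx (hiA j) (loB j)).
Proof. by rewrite /IP !mxE. Qed.

Lemma IP_lin (d : 'I_4 -> algC) (X : 'I_4 -> 'M[algC]_4) :
  IP (\sum_k d k *: X k) = \sum_k d k *: IP (X k).
Proof.
apply/matrixP => i j; rewrite IPE [RHS]summxE.
under [RHS]eq_bigr => k _ do rewrite mxE IPE.
case: ifP => _; rewrite !summxE.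
  rewrite -big_split mulr_suml; apply: eq_bigr => k _; rewrite !mxE /=; ring.
by apply: eq_bigr => k _; rewrite !mxE.
Qed.

Lemma lin_bound (S : 'M[algC]_4) (u : 'rV[algC]_4)
  (R1 : forall (c : 'cV[algC]_4),
    0 <= 4%:R * (u *m IP (c *m adj c) *m adj u) 0 0 + (u *m adj u) 0 0 * \tr (c *m adj c)) :
  density_matrix S -> 0 <= 4%:R * (u *m IP S *m adj u) 0 0 + (u *m adj u) 0 0.
Proof.
case=> Sh Spsd Str.
have -> : (u *m adj u) 0 0 = (u *m adj u) 0 0 * \tr S by rewrite Str mulr1.
have [d [c [d0 ->]]] := @decomp S Sh Spsd.
rewrite IP_lin mulmx_sumr mulmx_suml summxE raddf_sum /=.
rewrite mulr_sumr mulr_sumr -big_split /=; apply: sumr_ge0 => k _.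
rewrite -scalemxAr -scalemxAl mxE mxtraceZ.
have := R1 (c k).
have -> : 4%:R * (d k * (u *m IP (c k *m adj (c k)) *m adj u) 0 0) +
   (u *m adj u) 0 0 * (d k * \tr (c k *m adj (c k))) =
   d k * (4%:R * (u *m IP (c k *m adj (c k)) *m adj u) 0 0 +
   (u *m adj u) 0 0 * \tr (c k *m adj (c k))) by ring.
by move=> H; rewrite mulr_ge0.
Qed.

Lemma adjM m n p (A : 'M[algC]_(m, n)) (B : 'M[algC]_(n, p)) :
  adj (A *m B) = adj B *m adj A.
Proof. by rewrite /adj trmx_mul map_mxM. Qed.

Lemma dot_gt0 (v : 'rV[algC]_4) : v != 0 -> 0 < (v *m adj v) 0 0.
Proof.
move=> vn0; rewrite mxE lt_def sumr_ge0 ?andbT; last first.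
  by move=> i _; rewrite /adj !mxE mul_conjC_ge0.
rewrite psumr_eq0; last by move=> i _; rewrite /adj !mxE mul_conjC_ge0.
apply: contra vn0 => /allP H; apply/eqP/matrixP => i j.
rewrite ord1 !mxE; have := H j (mem_index_enum _).
by rewrite /adj !mxE mul_conjC_eq0 => /eqP.
Qed.

Lemma part1 (S : 'M[algC]_4) : density_matrix S ->
  forall a : algC, eigenvalue (IP S) a -> - (4%:R)^-1 <= a.
Proof.
move=> dS a /eigenvalueP [v hv vn0].
have := @lin_bound S v (@val_rank1 v) dS.
rewrite hv -scalemxAl mxE.
have Np := @dot_gt0 v vn0.
have -> : 4%:R * (a * (v *m adj v) 0 0) + (v *m adj v) 0 0 =
   (4%:R * a + 1) * (v *m adj v) 0 0 by ring.
rewrite pmulr_lge0 // => H.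
rewrite -subr_ge0 opprK.
have -> : a + 4%:R^-1 = (4%:R * a + 1) * 4%:R^-1 by field.
by rewrite mulr_ge0 // invr_ge0 ler0n.
Qed.

Lemma ne01 : (i0 == i1) = false. Proof. by []. Qed.
Lemma ne02 : (i0 == i2) = false. Proof. by []. Qed.
Lemma ne03 : (i0 == i3) = false. Proof. by []. Qed.
Lemma ne10 : (i1 == i0) = false. Proof. by []. Qed.
Lemma ne12 : (i1 == i2) = false. Proof. by []. Qed.
Lemma ne13 : (i1 == i3) = false. Proof. by []. Qed.
Lemma ne20 : (i2 == i0) = false. Proof. by []. Qed.
Lemma ne21 : (i2 == i1) = false. Proof. by []. Qed.
Lemma ne23 : (i2 == i3) = false. Proof. by []. Qed.
Lemma ne30 : (i3 == i0) = false. Proof. by []. Qed.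
Lemma ne31 : (i3 == i1) = false. Proof. by []. Qed.
Lemma ne32 : (i3 == i2) = false. Proof. by []. Qed.

Lemma ord4P (P : 'I_4 -> Prop) : P i0 -> P i1 -> P i2 -> P i3 -> forall j, P j.
Proof.
move=> H0 H1 H2 H3 [[|[|[|[|n]]]] H] //.
- by have -> : Ordinal H = i0 by apply/val_inj.
- by have -> : Ordinal H = i1 by apply/val_inj.
- by have -> : Ordinal H = i2 by apply/val_inj.
- by have -> : Ordinal H = i3 by apply/val_inj.
Qed.

Definition sq := (sqrtC (2%:R : algC))^-1.
Lemma sq_conj : sq^* = sq.
Proof. by apply/CrealP; rewrite /sq rpredV sqrtC_real // ler0n. Qed.
Lemma sq_sq : sq * sq = 2%:R^-1.
Proof. by rewrite /sq -invfM -expr2 sqrtCK. Qed.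

Lemma phiE : [/\ phi_plus i0 0 = sq, phi_plus i1 0 = 0, phi_plus i2 0 = 0 & phi_plus i3 0 = sq].
Proof. by rewrite /phi_plus !mxE t00 t11. Qed.

Lemma rhoE i j : rho_plus i j = phi_plus i 0 * (phi_plus j 0)^*.
Proof. by rewrite /rho_plus mxE big_ord1 /adj !mxE. Qed.

Lemma part2 : density_matrix rho_plus /\ eigenvalue (IP rho_plus) (- (4%:R)^-1).
Proof.
have [p0 p1 p2 p3] := phiE.
split; first split.
- by rewrite /rho_plus adjM adjK.
- move=> v; rewrite /rho_plus !mulmxA -mulmxA.
  have -> : adj phi_plus *m v = adj (adj v *m phi_plus) by rewrite adjM adjK.
  by rewrite mxE big_ord1 /adj !mxE mul_conjC_ge0.
- rewrite /mxtrace sum4 !rhoE p0 p1 p2 p3 sq_conj sq_sq rmorph0 mulr0 !addr0.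
  by field.
apply/eigenvalueP.
exists (\row_j (if j == i0 then 1 else if j == i3 then -1 else 0)); last first.
  apply/eqP => /rowP /(_ i0); rewrite !mxE /=.
  by move/eqP; rewrite oner_eq0.
apply/rowP; apply: ord4P; rewrite !mxE sum4 !mxE
  !h0 !h1 !h2 !h3 !l0 !l1 !l2 !l3 ?e01 ?e10 ?eqxx !t00 !t01 !t10 !t11 !big_ord1 /adj !mxE
  ?ne01 ?ne02 ?ne03 ?ne10 ?ne12 ?ne13 ?ne20 ?ne21 ?ne23 ?ne30 ?ne31 ?ne32 ?eqxx
  ?rmorph0 -/sq; rewrite ?t00 ?t11 ?eqxx ?ne01 ?ne02 ?ne03 ?ne10 ?ne12 ?ne13 ?ne20 ?ne21 ?ne23 ?ne30 ?ne31 ?ne32 /= ?rmorph0 ?sq_conj ?sq_sq; by field.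
Qed.

Theorem proposition1 :
  (* every eigenvalue of (I ⊗ P)(σ) is >= -1/4 for every density matrix σ *)
  (forall S : 'M[algC]_4, density_matrix S ->
     forall a : algC, eigenvalue (IP S) a -> - (4%:R)^-1 <= a)
  /\
  (* the value -1/4 is attained at the maximally entangled state *)
  (density_matrix rho_plus /\ eigenvalue (IP rho_plus) (- (4%:R)^-1)).
Proof.
split; first exact: part1.
exact: part2.
Qed.
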